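(* Let $H$ be a digraph (possibly with loops), let $D$ be an $H$-colored quasi-transitive digraph, let $k \geq 4$, and let $u,v$ be distinct vertices of $D$. If there exists a directed $uv$-walk in $D$, then either $u$ and $v$ are adjacent in $D$, or $(v,u)$ is a symmetric arc of $C_{H}^{k-1}(D)$ (that is, both $(u,v)$ and $(v,u)$ are arcs of $C_{H}^{k-1}(D)$).
   Context: All digraphs are finite. A digraph $D$ is quasi-transitive if for all distinct $u,v\in V(D)$, whenever there is a directed $uv$-path of length $2$, $u$ and $v$ are joined by an arc (in some direction). Two vertices are adjacent if there is an arc between them. $D$ has no loops and comes with a map $\rho: A(D)\to V(H)$. For a walk $W=(x_0,\ldots,x_n)$ in $D$, there is an obstruction on $x_i$ if $(\rho(x_{i-1},x_i),\rho(x_i,x_{i+1})) \notin A(H)$; for an open walk this is considered at internal vertices $x_i$, $1\le i\le n-1$, for a closed walk at all $i\in\{0,\ldots,n-1\}$ with indices modulo $n$. $O_H(W)$ is the set of indices with an obstruction; the $H$-length is $l_H(W)=|O_H(W)|+1$ for open $W$ and $|O_H(W)|$ for closed $W$. The $(k-1,H)$-closure $C_H^{k-1}(D)$ is the digraph on $V(D)$ in which $(x,y)$ is an arc iff there is a directed $xy$-path in $D$ of $H$-length at most $k-1$. *)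

(* Defs.v *)
From mathcomp Require Import all_boot.
Set Implicit Arguments. Unset Strict Implicit. Unset Printing Implicit Defensive.

(* H : vertex type VH, arc relation AH (loops allowed).
   rho : V -> V -> VH is the colouring; only its values rho x y on arcs (x,y)
   of D are ever used. *)

Section Defs.
Variables (V VH : finType) (A : rel V) (AH : rel VH) (rho : V -> V -> VH).

Definition loopless : Prop := forall x, ~~ A x x.

Definition quasi_transitive : Prop :=
  forall u w v, u != v -> A u w -> A w v -> A u v || A v u.

Definition adjacent (u v : V) : bool := A u v || A v u.

Definition walk (x0 : V) (s : seq V) : bool := path A x0 s.
Definition dpath (x0 : V) (s : seq V) : bool := path A x0 s && uniq (x0 :: s).

Fixpoint obstructions (l : seq V) : nat :=
  match l with
  | a :: ((b :: c :: _) as t) => (~~ AH (rho a b) (rho b c)) + obstructions t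
  | _ => 0
  end.

Definition H_length (l : seq V) : nat := obstructions l + 1.

Definition closure_arc (k : nat) (x y : V) : Prop :=
  x != y /\ exists s : seq V,
    [/\ dpath x s, last x s = y & H_length (x :: s) <= k - 1].

End Defs.

(* Main.v *)
Require Import Defs.
From mathcomp Require Import all_boot.
From mathcomp Require Import zify.
Set Implicit Arguments. Unset Strict Implicit. Unset Printing Implicit Defensive.

Fixpoint reach (V : finType) (A : rel V) (n : nat) (a b : V) : bool :=
  if n is n'.+1 then [exists c, A a c && reach A n' c b] else a == b.

Lemma reach_add (V : finType) (A : rel V) m n a b :
  reach A (m + n) a b = [exists c, reach A m a c && reach A n c b].
Proof.
elim: m a => [|m IH] a /=.
  apply/idP/existsP => [h|[c /andP[/eqP<- h]]] //; by exists a; rewrite eqxx.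
apply/existsP/existsP => [[c /andP[ac]]|[c /andP[/existsP[d /andP[ad dc]] cb]]].
  rewrite IH => /existsP[d /andP[cd db]]; exists d; rewrite db andbT.
  by apply/existsP; exists c; rewrite ac.
by exists d; rewrite ad IH; apply/existsP; exists c; rewrite dc.
Qed.

Lemma reach1 (V : finType) (A : rel V) a b : reach A 1 a b = A a b.
Proof.
by apply/existsP/idP => [[c /andP[h /eqP<-]]|h] //; exists b; rewrite h eqxx.
Qed.

Lemma walk_reach (V : finType) (A : rel V) a s :
  path A a s -> reach A (size s) a (last a s).
Proof.
elim: s a => [|x s IH] a /=; first by rewrite eqxx.
by move=> /andP[ax p]; apply/existsP; exists x; rewrite ax IH.
Qed.

Definition sh (V : finType) (A : rel V) n a b :=
  reach A n a b /\ forall m, m < n -> ~~ reach A m a b.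

Lemma sh_split (V : finType) (A : rel V) m n a b c :
  sh A (m + n) a b -> reach A m a c -> reach A n c b -> sh A m a c /\ sh A n c b.
Proof.
move=> [H1 H2] h1 h2; split; split => // k hk; apply/negP => h.
  move: (H2 (k + n)); rewrite ltn_add2r hk reach_add => /(_ isT) /negP; apply.
  by apply/existsP; exists c; rewrite h.
move: (H2 (m + k)); rewrite ltn_add2l hk reach_add => /(_ isT) /negP; apply.
by apply/existsP; exists c; rewrite h1.
Qed.

Lemma sh_ne (V : finType) (A : rel V) n a b : sh A n a b -> 0 < n -> b != a.
Proof. by move=> [_ H] hn; move: (H 0 hn) => /=; rewrite eq_sym. Qed.

Lemma sh_nA (V : finType) (A : rel V) n a b : sh A n a b -> 1 < n -> ~~ A a b.
Proof. by move=> [_ H] hn; move: (H 1 hn); rewrite reach1. Qed.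

Lemma back (V : finType) (A : rel V) n a b c : quasi_transitive A ->
  sh A n a b -> 1 < n -> A b c -> A c a -> A b a.
Proof.
move=> qt hs hn bc ca.
have := qt b c a (sh_ne hs (ltnW hn)) bc ca.
by rewrite (negbTE (sh_nA hs hn)) orbF.
Qed.

Lemma sh2 (V : finType) (A : rel V) a b : quasi_transitive A ->
  sh A 2 a b -> A b a.
Proof.
move=> qt hs; have := proj1 hs; rewrite (reach_add _ 1 1) => /existsP[c /andP[ac cb]].
rewrite !reach1 in ac cb.
have := qt a c b _ ac cb; rewrite eq_sym (sh_ne hs) // => /(_ isT).
by rewrite (negbTE (sh_nA hs _)).
Qed.

Lemma long (V : finType) (A : rel V) N : quasi_transitive A ->
  forall n a b, n < N -> 4 <= n -> sh A n a b -> A b a.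
Proof.
move=> qt; elim: N => // N IH n a b hnN hn hs.
have [e5|n5] := eqVneq n 5.
  subst n.
  have := proj1 hs; rewrite (reach_add _ 3 2) => /existsP[e /andP[r1 r2]].
  have [s1 s2] := sh_split (hs : sh A (3 + 2) a b) r1 r2.
  have be := sh2 qt s2.
  move: r2; rewrite (reach_add _ 1 1) => /existsP[d /andP[]]; rewrite !reach1 => ed db.
  have r4 : reach A 4 a d.
    by rewrite (reach_add _ 3 1); apply/existsP; exists e; rewrite r1 reach1.
  have db1 : reach A 1 d b by rewrite reach1.
  have [s4 _] := sh_split (hs : sh A (4 + 1) a b) r4 db1.
  have da := IH 4 a d ltac:(lia) (leqnn _) s4.
  have ea := back qt s1 isT ed da.
  exact: back qt hs isT be ea.
have hs' : sh A (2 + (n - 2)) a b by rewrite (_ : 2 + (n - 2) = n) //; lia.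
have := proj1 hs'; rewrite reach_add => /existsP[c /andP[r1 r2]].
have [s1 s2] := sh_split hs' r1 r2.
have ca := sh2 qt s1.
have bc : A b c.
  have [e2|ne2] := eqVneq (n - 2) 2.
    by rewrite e2 in s2; exact: sh2 qt s2.
  by apply: (IH (n - 2)) s2; lia.
exact: back qt hs (leq_trans _ hn) bc ca.
Qed.

Lemma arc_neq (V : finType) (A : rel V) x y : loopless A -> A x y -> x != y.
Proof. by move=> ll axy; apply/eqP => e; move: axy; rewrite e (negbTE (ll y)). Qed.

Theorem lemma15 (V VH : finType) (A : rel V) (AH : rel VH)
    (rho : V -> V -> VH) (k : nat) (u v : V) :
  loopless A -> quasi_transitive A -> 4 <= k -> u != v ->
  (exists s : seq V, walk A u s /\ last u s = v) ->
  adjacent A u v \/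
  (closure_arc A AH rho k u v /\ closure_arc A AH rho k v u).
Proof.
move=> ll qt hk uv [s [ws ls]].
have ex : exists n, reach A n u v by exists (size s); rewrite -ls; exact: walk_reach.
case: (ex_minnP ex) => n hr hmin.
have hs : sh A n u v.
  split => // m hm; apply/negP => h; have := hmin m h; lia.
case: (boolP (adjacent A u v)) => [h|nadj]; [by left|right].
move: nadj; rewrite /adjacent negb_or => /andP[nuv nvu].
have n0 : n != 0 by apply/eqP => e; move: hr; rewrite e /= (negbTE uv).
have n1 : n != 1 by apply/eqP => e; move: hr; rewrite e reach1 (negbTE nuv).
have n2 : n != 2 by apply/eqP => e; rewrite e in hs; move: (sh2 qt hs); rewrite (negbTE nvu).
have n3 : n = 3.
  apply/eqP; apply/negPn/negP => n3.
  by move: (long qt (n := n) (N := n.+1) (ltnSn _) ltac:(lia) hs); rewrite (negbTE nvu).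
rewrite n3 in hs hr.
move: hr; rewrite (reach_add _ 1 2) => /existsP[x1 /andP[r1 r2]].
have [_ s12] := sh_split (hs : sh A (1 + 2) u v) r1 r2.
have vx1 := sh2 qt s12.
move: r1 r2; rewrite reach1 (reach_add _ 1 1) => ux1 /existsP[x2 /andP[]].
rewrite !reach1 => x12 x2v.
have r3 : reach A 2 u x2.
  by rewrite (reach_add _ 1 1); apply/existsP; exists x1; rewrite !reach1 ux1 x12.
have x2v1 : reach A 1 x2 v by rewrite reach1.
have [s21 _] := sh_split (hs : sh A (2 + 1) u v) r3 x2v1.
have x2u := sh2 qt s21.
have d1 := arc_neq ll ux1. have d2 := arc_neq ll x12. have d3 := arc_neq ll x2v.
have d4 := arc_neq ll x2u. have d5 := arc_neq ll vx1.
split; split; [exact: uv| |by rewrite eq_sym|].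
  exists [:: x1; x2; v]; split => //.
    rewrite /dpath /= ux1 x12 x2v /= !inE.
    by rewrite (negbTE d1) (negbTE d2) (negbTE d3) (negbTE uv) eq_sym (negbTE d4) eq_sym (negbTE d5).
  rewrite /H_length /=.
  apply: (@leq_trans 3); last by move: hk; clear; lia.
  by rewrite addn0 addn1 ltnS (leq_add (leq_b1 _) (leq_b1 _)).
exists [:: x1; x2; u]; split => //.
  rewrite /dpath /= vx1 x12 x2u /= !inE.
  have e1 : (v == u) = false by rewrite eq_sym (negbTE uv).
  have e2 : (x1 == u) = false by rewrite eq_sym (negbTE d1).
  have e3 : (v == x2) = false by rewrite eq_sym (negbTE d3).
  by rewrite (negbTE d5) (negbTE d2) (negbTE d4) e1 e2 e3.
rewrite /H_length /=.
apply: (@leq_trans 3); last by move: hk; clear; lia.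
  by rewrite addn0 addn1 ltnS (leq_add (leq_b1 _) (leq_b1 _)).
Qed.
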